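(* Let $k>t$ and $n>2k-t$, and let $\Gamma$ be a $(t+2)$-space in $\mathrm{PG}(n,q)$. Let $\mathcal{S}$ be the set of all $k$-spaces of $\mathrm{PG}(n,q)$ meeting $\Gamma$ in at least a $(t+1)$-space. Then $\mathcal{S}$ is a maximal set of $k$-spaces pairwise intersecting in at least a $t$-space, and \[|\mathcal{S}|=\left[{n-t-2\atop k-t-2}\right]_q\left(1+\theta_{t+2}q^{k-t-1}\frac{q^{n-k}-1}{q^{k-t-1}-1}\right).\]
   Context: $k$-spaces are projective subspaces of dimension $k$; ''intersecting in at least a $t$-space'' means the intersection has projective dimension at least $t$. Maximal means no further $k$-space can be added while keeping the property. $\left[{n\atop k}\right]_q=\frac{(q^n-1)\cdots(q^{n-k+1}-1)}{(q^k-1)\cdots(q-1)}$ for $k>0$, $=1$ for $k=0$; $\theta_m=\frac{q^{m+1}-1}{q-1}$. *)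

(* Defs.v *)
From HB Require Import structures.
From mathcomp Require Import all_boot all_order all_algebra all_field.
Set Implicit Arguments. Unset Strict Implicit. Unset Printing Implicit Defensive.
Import Order.TTheory GRing.Theory Num.Theory.

(* PG(n,q) is modelled over a finite field F with q = #|F| elements.
   Vector subspaces of F^(n+1) are represented canonically by square
   matrices A : 'M[F]_(n.+1) with A = <<A>>%MS (the canonical generator
   of their row space), so distinct subspaces are distinct matrices.
   A projective k-space is a vector subspace of rank k+1. *)

Section PG.
Variable F : finFieldType.
Variable n : nat.

Definition is_subspace (A : 'M[F]_(n.+1)) : bool := (<<A>>%MS == A).

Definition is_pspace (k : nat) (A : 'M[F]_(n.+1)) : bool :=
  is_subspace A && (\rank A == k.+1).

Definition meet_atleast (t : nat) (A B : 'M[F]_(n.+1)) : bool :=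
  t.+1 <= \rank (A :&: B)%MS.

Definition t_intersecting (k t : nat) (S : {set 'M[F]_(n.+1)}) : Prop :=
  (forall A, A \in S -> is_pspace k A) /\
  (forall A B, A \in S -> B \in S -> meet_atleast t A B).

Definition maximal_t_intersecting (k t : nat) (S : {set 'M[F]_(n.+1)}) : Prop :=
  t_intersecting k t S /\
  (forall X, is_pspace k X -> X \notin S -> ~ t_intersecting k t (X |: S)).

Definition pspaces_meeting (k s : nat) (G : 'M[F]_(n.+1)) : {set 'M[F]_(n.+1)} :=
  [set A : 'M[F]_(n.+1) | is_pspace k A && meet_atleast s A G].
End PG.

Local Open Scope ring_scope.

Definition gauss_binom (q m j : nat) : rat :=
  \prod_(i < j) (((q ^ (m - i))%N%:R - 1) / ((q ^ i.+1)%N%:R - 1)).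

Definition theta (q m : nat) : rat := ((q ^ m.+1)%N%:R - 1) / (q%:R - 1).

(* Main.v *)
Require Import Defs.
From mathcomp Require Import all_boot all_order all_algebra all_field.
From mathcomp Require Import zify ring.
Set Implicit Arguments. Unset Strict Implicit. Unset Printing Implicit Defensive.
Import GRing.Theory Num.Theory.

Section Count.
Variable F : finFieldType.
Variable N : nat.

Lemma card_subrow m (A : 'M[F]_(m, N)) :
  #|[set v : 'rV[F]_N | (v <= A)%MS]| = (#|F| ^ \rank A)%N.
Proof.
rewrite -[\rank A]mul1n -card_mx.
have injA: injective (mulmxr (row_base A)).
  have /row_freeP[A' A'K] := row_base_free A.
  by move=> ?; apply: can_inj (mulmxr A') _ => u; rewrite /= -mulmxA A'K mulmx1.
rewrite -(card_image (injA _)); apply: eq_card => v.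
by rewrite inE -(eq_row_base A) (sameP submxP codomP).
Qed.

Lemma rank_addv m (A : 'M[F]_(m, N)) (v : 'rV[F]_N) :
  \rank (A + v)%MS = (\rank A + ~~ (v <= A)%MS)%N.
Proof.
case: (boolP (v <= A)%MS) => vA.
  by rewrite addn0 (addsmx_idPl vA).
have := mxrank_sum_cap A v.
have r1 : \rank v = 1%N.
  rewrite rank_rV; case: eqP => // v0; move: vA; by rewrite v0 sub0mx.
have c0 : \rank (A :&: v)%MS = 0%N.
  have h1 := rank_leq_row (A :&: v)%MS.
  have /mxrank_leqif_sup h2 := capmxSr A v.
  case: (ltnP (\rank (A :&: v)%MS) 1) => h; first lia.
  have h3 := mxrankS (capmxSr A v).
  have e : \rank (A :&: v)%MS = \rank v by lia.
  have : (v <= A :&: v)%MS by rewrite -(h2.2); apply/eqP.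
  by rewrite sub_capmx submx_refl andbT (negbTE vA).
lia.
Qed.

Definition Mset d r (D0 : 'M[F]_(d, N)) (G : 'M[F]_N) :=
  [set M : 'M[F]_(r, N) | (\rank (D0 + M)%MS == d + r)%N && (M <= G)%MS].

Lemma card_diff_sub m1 m2 (G : 'M[F]_(m1, N)) (B : 'M[F]_(m2, N)) : (B <= G)%MS ->
  #|[set v : 'rV[F]_N | (v <= G)%MS && ~~ (v <= B)%MS]| =
  (#|F| ^ \rank G - #|F| ^ \rank B)%N.
Proof.
move=> BG.
have -> : [set v : 'rV[F]_N | (v <= G)%MS && ~~ (v <= B)%MS] =
  [set v : 'rV[F]_N | (v <= G)%MS] :\: [set v : 'rV[F]_N | (v <= B)%MS].
  by apply/setP => v; rewrite !inE andbC.
rewrite cardsDS ?card_subrow //.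
by apply/subsetP => v; rewrite !inE => vB; apply: submx_trans BG.
Qed.

Lemma card_Mset d (D0 : 'M[F]_(d, N)) (G : 'M[F]_N) :
  \rank D0 = d -> (D0 <= G)%MS -> forall r,
  #|Mset r D0 G| = (\prod_(i < r) (#|F| ^ \rank G - #|F| ^ (d + i)))%N.
Proof.
move=> rD DG; elim=> [|r IH].
  rewrite big_ord0.
  have -> : Mset 0 D0 G = setT.
    apply/setP => M; rewrite !inE flatmx0 sub0mx andbT addn0.
    by rewrite addsmx0 rD eqxx.
  by rewrite cardsT card_mx mul0n expn0.
pose Q (M : 'M[F]_(r, N)) (v : 'rV[F]_N) := (v <= G)%MS && ~~ (v <= D0 + M)%MS.
pose P := [set p : 'M[F]_(r, N) * 'rV[F]_N | (p.1 \in Mset r D0 G) && Q p.1 p.2].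
have eqS : Mset r.+1 D0 G = [set (col_mx p.2 p.1 : 'M[F]_(1 + r, N)) | p in P].
  apply/setP => M; rewrite -[M](@vsubmxK F 1%N r N); set v := usubmx _; set M' := dsubmx _.
  apply/idP/imsetP.
    rewrite inE => /andP[/eqP rk]; rewrite (col_mx_sub v M' G) => /andP[vG M'G].
    have : \rank (D0 + col_mx v M')%MS = \rank (D0 + M' + v)%MS.
      rewrite (adds_eqmx (eqmx_refl D0) (eqmx_sym (addsmxE v M'))). rewrite (addsmxA D0 v M').
      by rewrite -(addsmxA D0 v M') (addsmxC v M') (addsmxA D0 M' v).
    rewrite rank_addv rk => e.
    have b1 := mxrank_adds_leqif D0 M'.
    have b2 : (\rank M' <= r)%N by apply: rank_leq_row.
    have hv : ~~ (v <= D0 + M')%MS.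
      apply/negP => hv; move: e; rewrite hv /=; rewrite rD in b1; case: b1 => b1 _; lia.
    exists (M', v) => //; rewrite inE /=; apply/andP; split; last by apply/andP; split.
    rewrite inE M'G andbT; apply/eqP.
    move: e; rewrite hv /=; lia.
  - move=> [[M1 v1]]; rewrite inE /= => /andP[]; rewrite inE => /andP[/eqP rk M1G].
    move=> /andP[v1G hv] e.
    have [-> ->] := @eq_col_mx _ 1%N r N _ _ _ _ e.
    rewrite inE (col_mx_sub v1 M1 G) v1G M1G andbT.
    have : \rank (D0 + col_mx v1 M1)%MS = \rank (D0 + M1 + v1)%MS.
      rewrite (adds_eqmx (eqmx_refl D0) (eqmx_sym (addsmxE v1 M1))) (addsmxA D0 v1 M1).
      by rewrite -(addsmxA D0 v1 M1) (addsmxC v1 M1) (addsmxA D0 M1 v1).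
    rewrite rank_addv rk hv => ->; apply/eqP; lia.
rewrite eqS card_imset; last first.
  by move=> [a b] [c e] /= h; have [-> ->] := @eq_col_mx _ 1%N r N _ _ _ _ h.
rewrite big_ord_recr /= -IH.
rewrite -sum_nat_const -(sum1_card (mem P)).
rewrite (eq_bigl (fun p => (p.1 \in Mset r D0 G) && Q p.1 p.2)); last first.
  by move=> p; rewrite inE.
rewrite -(pair_big_dep (fun M => M \in Mset r D0 G) Q (fun _ _ => 1%N)) /=.
apply: eq_bigr => M; rewrite inE => /andP[/eqP rk MG].
rewrite sum1dep_card card_diff_sub ?rk //.
by rewrite addsmx_sub DG MG.
Qed.


Definition Ks d r (D0 : 'M[F]_(d, N)) (G : 'M[F]_N) :=
  [set K : 'M[F]_N | [&& <<K>>%MS == K, \rank K == (d + r)%N, (D0 <= K)%MS & (K <= G)%MS]].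

Lemma card_Ks d (D0 : 'M[F]_(d, N)) (G : 'M[F]_N) r :
  \rank D0 = d -> (D0 <= G)%MS ->
  (#|Ks r D0 G| * \prod_(i < r) (#|F| ^ (d + r) - #|F| ^ (d + i)))%N =
  (\prod_(i < r) (#|F| ^ \rank G - #|F| ^ (d + i)))%N.
Proof.
move=> rD DG; rewrite -(card_Mset rD DG) -sum_nat_const -(sum1_card (mem (Mset r D0 G))).
rewrite (partition_big (fun M : 'M[F]_(r, N) => <<(D0 + M)%MS>>%MS) (mem (Ks r D0 G))); last first.
  move=> M; rewrite !inE => /andP[/eqP rk MG].
  rewrite genmx_id eqxx /= mxrank_gen rk eqxx /= !genmxE addsmxSl /=.
  by rewrite addsmx_sub DG MG.
apply: eq_bigr => K; rewrite inE => /and4P[/eqP gK /eqP rK DK KG].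
have rK' : \rank K = (d + r)%N by [].
rewrite -rK' -(card_Mset rD DK) -sum1_card; apply: eq_bigl => M.
rewrite !inE; apply/idP/idP.
- case/andP => /eqP rk MK.
  have sub : (D0 + M <= K)%MS by rewrite addsmx_sub DK MK.
  rewrite rk eqxx /= (submx_trans MK KG) /=.
  apply/eqP; rewrite -gK; apply/eq_genmx; apply/eqmxP.
  by rewrite -(mxrank_leqif_eq sub).2 rk rK.
- case/andP => /andP[/eqP rk MG] /eqP <-.
  by rewrite rk eqxx /= genmxE addsmxSr.
Qed.

End Count.

Lemma double_count (F : finFieldType) (n t k : nat) (Gamma : 'M[F]_n.+1) (B : nat) :
  is_pspace (t + 2) Gamma ->
  let Hs := [set H : 'M[F]_n.+1 | [&& <<H>>%MS == H, \rank H == (t + 2)%N & (H <= Gamma)%MS]] in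
  let P := [set K : 'M[F]_n.+1 | is_pspace k K] in
  (forall H, H \in Hs -> #|[set K in P | (H <= K)%MS]| = B) ->
  (#|Hs| * B + #|[set K in P | (Gamma <= K)%MS]| =
   #|Hs| * #|[set K in P | (Gamma <= K)%MS]| + #|pspaces_meeting k (t + 1) Gamma|)%N.
Proof.
move=> /andP[/eqP gG /eqP rG] Hs P hB.
have e1 : (#|Hs| * B = \sum_(K in P) #|[set H in Hs | (H <= K)%MS]|)%N.
  rewrite -sum_nat_const.
  transitivity (\sum_(H in Hs) \sum_(K in P | (H <= K)%MS) 1)%N.
    by apply: eq_bigr => H /hB <-; rewrite sum1dep_card; apply: eq_card => K; rewrite !inE.
  rewrite (exchange_big_dep (mem P)) /=; last by move=> H K _ /andP[].
  apply: eq_bigr => K; rewrite inE => KP; rewrite sum1dep_card; apply: eq_card => H; rewrite !inE KP.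
  by case: [&& _, _ & _].
have eA : #|[set K in P | (Gamma <= K)%MS]| = (\sum_(K in P) ((Gamma <= K)%MS : nat))%N.
  transitivity (\sum_(K in P | (Gamma <= K)%MS) 1)%N.
    by rewrite sum1dep_card; apply: eq_card => K; rewrite !inE.
  by rewrite big_mkcondr /=; apply: eq_bigr => K _; case: (Gamma <= K)%MS.
have eS : #|pspaces_meeting k (t + 1) Gamma| =
          (\sum_(K in P) (K \in pspaces_meeting k (t + 1) Gamma : nat))%N.
  transitivity (\sum_(K in P | K \in pspaces_meeting k (t + 1) Gamma) 1)%N.
    rewrite sum1dep_card; apply: eq_card => K; rewrite !inE.
    by case: (is_pspace k K); rewrite ?andbT ?andbF.
  by rewrite big_mkcondr /=; apply: eq_bigr => K _; case: (_ \in _).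
rewrite e1 eA eS big_distrr /= -!big_split /=.
apply: eq_bigr => K; rewrite inE => /andP[gK rK].
case: (boolP (Gamma <= K)%MS) => GK.
  have -> : [set H in Hs | (H <= K)%MS] = Hs.
    apply/setP => H; rewrite !inE; apply/andP/idP => [[] //|h]; split => //.
    by move: h => /and3P[_ _ HG]; apply: submx_trans GK.
  have -> : K \in pspaces_meeting k (t + 1) Gamma.
    rewrite !inE /is_pspace gK rK /meet_atleast.
    by rewrite (capmx_idPr GK) rG; lia.
  by rewrite /= muln1 addn1.
rewrite muln0 !addn0.
case: (boolP (K \in pspaces_meeting k (t + 1) Gamma)) => KS.
  move: (KS); rewrite inE => /andP[_]; rewrite /meet_atleast => r1.
  have r2 : \rank (K :&: Gamma)%MS = (t + 2)%N.
    have /mxrank_leqif_sup h := capmxSr K Gamma.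
    have : \rank (K :&: Gamma)%MS != \rank Gamma.
      by rewrite h.2; apply: contra GK => /submx_trans; apply; apply: capmxSl.
    move: h.1; rewrite rG; lia.
  have -> : [set H in Hs | (H <= K)%MS] = [set <<(K :&: Gamma)%MS>>%MS].
    apply/setP => H; rewrite !inE; apply/idP/idP.
    - case/andP => /and3P[/eqP gH /eqP rH HG] HK.
      rewrite -gH; apply/eqP/eq_genmx; apply/eqmxP.
      have sub : (H <= K :&: Gamma)%MS by rewrite sub_capmx HK HG.
      by rewrite -(mxrank_leqif_eq sub).2 rH r2.
    - move/eqP => ->; rewrite genmx_id eqxx mxrank_gen r2 eqxx /= !genmxE.
      by rewrite capmxSr capmxSl.
  by rewrite cards1.
have -> : [set H in Hs | (H <= K)%MS] = set0.
  apply/setP => H; rewrite !inE; apply/negP => /andP[/and3P[_ /eqP rH HG] HK].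
  move/negP: KS; apply; rewrite inE /is_pspace gK rK /meet_atleast /=.
  have sub : (H <= K :&: Gamma)%MS by rewrite sub_capmx HK HG.
  have := mxrankS sub; rewrite rH; lia.
by rewrite cards0.
Qed.

Section Constr.
Variable F : finFieldType.
Variable N : nat.

Lemma exists_sub m (U : 'M[F]_(m, N)) s : (s <= \rank U)%N ->
  exists V : 'M[F]_N, (V <= U)%MS /\ \rank V = s.
Proof.
move=> sU.
have sN : (s <= N)%N by apply: leq_trans sU (rank_leq_col U).
pose V0 := ((pid_mx s : 'M[F]_(N, \rank U)) *m row_base U)%R.
exists V0; split.
  by rewrite -(eq_row_base U) submxMl.
by rewrite mxrankMfree ?row_base_free // rank_pid_mx.
Qed.

Lemma cap_rank0 m1 m2 m3 m4 (A : 'M[F]_(m1, N)) (B : 'M[F]_(m2, N))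
  (C : 'M[F]_(m3, N)) (D : 'M[F]_(m4, N)) :
  (A <= C)%MS -> (B <= D)%MS -> (C :&: D)%MS = 0%R -> \rank (A :&: B)%MS = 0%N.
Proof.
move=> AC BD CD; apply/eqP; rewrite mxrank_eq0 -submx0 -CD.
exact: capmxS.
Qed.

Lemma construct_Y (X G : 'M[F]_N) (k t n : nat) :
  N = n.+1 -> (t < k)%N -> (2 * k - t < n)%N ->
  \rank G = (t + 3)%N -> \rank X = k.+1 -> (\rank (X :&: G)%MS <= t.+1)%N ->
  exists Y : 'M[F]_N, [/\ \rank Y = k.+1, (t + 2 <= \rank (Y :&: G)%MS)%N &
                          (\rank (X :&: Y)%MS <= t)%N].
Proof.
move=> eN tk nk rG rX rXG.
have rGX : \rank (G :&: X)%MS = \rank (X :&: G)%MS by rewrite capmxC.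
have [d dE] : {d : nat | \rank (X :&: G)%MS = d} by exists (\rank (X :&: G)%MS).
rewrite dE in rXG rGX.
set C := (G :\: X)%MS.
have rC : \rank C = (t + 3 - d)%N.
  have := mxrank_cap_compl G X; rewrite rGX rG -/C; lia.
have CX : (C :&: X)%MS = 0%R by apply: capmx_diff.
have CG : (C <= G)%MS by apply: diffmxSl.
have [D1 [D1s rD1]] : exists D1 : 'M[F]_N, (D1 <= G :&: X)%MS /\ \rank D1 = d.-1.
  by apply: exists_sub; rewrite rGX leq_pred.
have [C1 [C1s rC1]] : exists C1 : 'M[F]_N, (C1 <= C)%MS /\ \rank C1 = (t + 2 - d.-1)%N.
  by apply: exists_sub; rewrite rC; lia.
set H := (D1 + C1)%MS.
have D1X : (D1 <= X)%MS by apply: submx_trans D1s (capmxSr _ _).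
have D1G : (D1 <= G)%MS by apply: submx_trans D1s (capmxSl _ _).
have C1X0 : \rank (C1 :&: X)%MS = 0%N by apply: cap_rank0 C1s (submx_refl X) CX.
have rH : \rank H = (t + 2)%N.
  have := mxrank_sum_cap D1 C1.
  have -> : \rank (D1 :&: C1)%MS = 0%N.
    by rewrite capmxC; apply: cap_rank0 C1s D1X CX.
  rewrite rD1 rC1 -/H; lia.
have HG : (H <= G)%MS by rewrite addsmx_sub D1G (submx_trans C1s CG).
have rHX : (\rank (H :&: X)%MS <= t)%N.
  have h1 := mxrank_sum_cap H X.
  have h2 := mxrank_sum_cap C1 X.
  have h3 : (\rank (C1 + X)%MS <= \rank (H + X)%MS)%N.
    by apply: mxrankS; apply: addsmxS (submx_refl X); apply: addsmxSr.
  rewrite rH rX C1X0 rC1 in h1 h2; lia.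
set U := (H + X)%MS.
have [e eE] : {e : nat | \rank (H :&: X)%MS = e} by exists (\rank (H :&: X)%MS).
rewrite eE in rHX.
have rU : \rank U = (t + 2 + k.+1 - e)%N.
  have := mxrank_sum_cap H X; rewrite rH rX eE -/U; lia.
set a := (k - t - 1)%N.
have [W2 [W2s rW2]] : exists W2 : 'M[F]_N, (W2 <= U^C)%MS /\ \rank W2 = minn a (N - \rank U).
  by apply: exists_sub; rewrite mxrank_compl; lia.
have rXH : \rank (X :\: H)%MS = (k.+1 - e)%N.
  have := mxrank_cap_compl X H; rewrite capmxC eE rX; lia.
have [W1 [W1s rW1]] : exists W1 : 'M[F]_N, (W1 <= X :\: H)%MS /\ \rank W1 = (a - minn a (N - \rank U))%N.
  apply: exists_sub; rewrite rXH rU; lia.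
have W1X : (W1 <= X)%MS by apply: submx_trans W1s (diffmxSl _ _).
set Y := (H + W1 + W2)%MS.
have rHW1 : \rank (H + W1)%MS = (t + 2 + \rank W1)%N.
  have := mxrank_sum_cap H W1.
  have -> : \rank (H :&: W1)%MS = 0%N.
    by rewrite capmxC; apply: cap_rank0 W1s (submx_refl H) (capmx_diff _ _).
  rewrite rH; lia.
have HW1U : (H + W1 <= U)%MS by apply: addsmxS (submx_refl H) W1X.
have rY : \rank Y = k.+1.
  have := mxrank_sum_cap (H + W1)%MS W2.
  have -> : \rank ((H + W1) :&: W2)%MS = 0%N.
    by apply: cap_rank0 HW1U W2s (capmx_compl _).
  rewrite rHW1 rW1 rW2 -/Y; lia.
have HY : (H <= Y)%MS by rewrite /Y -addsmxA addsmxSl.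
have W2Y : (W2 <= Y)%MS by apply: addsmxSr.
exists Y; split => //.
  apply: leq_trans (mxrankS (_ : (H <= Y :&: G)%MS)); first by rewrite rH.
  by rewrite sub_capmx HY HG.
have h1 := mxrank_sum_cap X Y.
have h2 := mxrank_sum_cap U W2.
have U0 : \rank (U :&: W2)%MS = 0%N.
  by apply: cap_rank0 (submx_refl U) W2s (capmx_compl _).
have h3 : (\rank (U + W2)%MS <= \rank (X + Y)%MS)%N.
  apply: mxrankS; rewrite addsmx_sub (submx_trans W2Y (addsmxSr X Y)) andbT.
  rewrite addsmx_sub addsmxSl andbT.
  exact: submx_trans HY (addsmxSr X Y).
rewrite U0 in h2; rewrite rX rY rU rW2 in h1 h2 h3.
lia.
Qed.
End Constr.

Local Open Scope ring_scope.

Lemma pow_gt1 (q e : nat) : (1 < q)%N -> (0 < e)%N -> (1 < q ^ e)%N.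
Proof. by move=> q1 e0; rewrite -{1}(expn0 q) ltn_exp2l. Qed.

Lemma natB_pow (q a b : nat) : (0 < q)%N -> (b <= a)%N ->
  ((q ^ a - q ^ b)%N%:R : rat) = (q ^ b)%N%:R * ((q ^ (a - b))%N%:R - 1).
Proof.
move=> q0 ba; rewrite natrB ?leq_pexp2l // mulrBr mulr1 -natrM -expnD subnKC //.
Qed.

Lemma prod_shift (q r : nat) :
  \prod_(i < r) ((q ^ (r - i))%N%:R - 1 : rat) = \prod_(i < r) ((q ^ i.+1)%N%:R - 1).
Proof.
rewrite (reindex_inj rev_ord_inj) /=; apply: eq_bigr => i _.
by rewrite subKn // ltn_ord.
Qed.

Lemma prod_pow_neq0 (q r : nat) : (1 < q)%N ->
  \prod_(i < r) ((q ^ i.+1)%N%:R - 1 : rat) != 0.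
Proof.
move=> q1; apply/prodf_neq0 => i _; rewrite subr_eq0 pnatr_eq1.
by apply/negP => /eqP e; have := @pow_gt1 q i.+1 q1 (ltn0Sn _); rewrite e.
Qed.

Lemma prod_fac (q d r g : nat) : (0 < q)%N -> (d + r <= g)%N ->
  \prod_(i < r) ((q ^ g - q ^ (d + i))%N%:R : rat) =
  \prod_(i < r) ((q ^ (d + i))%N%:R : rat) * \prod_(i < r) ((q ^ (g - d - i))%N%:R - 1).
Proof.
move=> q0 le; rewrite -big_split /=; apply: eq_bigr => i _.
have h : (d + i <= g)%N by have := ltn_ord i; lia.
by rewrite (natB_pow q0 h) subnDA.
Qed.

Lemma ratio_gauss (q g d r : nat) (x : nat) : (1 < q)%N -> (d + r <= g)%N ->
  (x * \prod_(i < r) (q ^ (d + r) - q ^ (d + i)))%N =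
  (\prod_(i < r) (q ^ g - q ^ (d + i)))%N ->
  (x%:R : rat) = gauss_binom q (g - d) r.
Proof.
move=> q1 le /(congr1 (fun n => (n%:R : rat))); rewrite natrM !natr_prod.
have q0 : (0 < q)%N by lia.
rewrite (prod_fac q0 le) (prod_fac q0 (leqnn (d + r))).
rewrite mulrCA => /mulfI e.
have /e {}e : \prod_(i < r) ((q ^ (d + i))%N%:R : rat) != 0.
  by apply/prodf_neq0 => i _; rewrite pnatr_eq0 expn_eq0; lia.
rewrite /gauss_binom prodf_div -e.
rewrite (eq_bigr (fun i : 'I_r => ((q ^ (r - i))%N%:R - 1 : rat))); last first.
  by move=> i _; rewrite addKn.
rewrite prod_shift mulfK //.
exact: prod_pow_neq0.
Qed.

Lemma pow_sub1_neq0 (q e : nat) : (1 < q)%N -> (0 < e)%N -> ((q ^ e)%N%:R - 1 : rat) != 0.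
Proof.
move=> q1 e0; rewrite subr_eq0 pnatr_eq1.
by apply/negP => /eqP E; have := pow_gt1 q1 e0; rewrite E.
Qed.

Lemma prod_pow_neq0' (q r : nat) : (1 < q)%N ->
  \prod_(i < r) ((q ^ i.+1)%N%:R - 1 : rat) != 0.
Proof. by move=> q1; apply/prodf_neq0 => i _; apply: pow_sub1_neq0. Qed.

Lemma gauss_pascal (q m j : nat) : (1 < q)%N ->
  gauss_binom q m.+1 j.+1 =
  gauss_binom q m j * ((q ^ m.+1)%N%:R - 1) / ((q ^ j.+1)%N%:R - 1).
Proof.
move=> q1; rewrite /gauss_binom !prodf_div.
rewrite [X in X / _ = _]big_ord_recl [X in _ / X = _]big_ord_recr /=.
rewrite subn0.
rewrite (eq_bigr (fun i : 'I_j => ((q ^ (m - i))%N%:R - 1 : rat))); last first.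
  by move=> i _; rewrite /bump /= subSS.
have h1 := prod_pow_neq0' j q1.
have h2 := @pow_sub1_neq0 q j.+1 q1 (ltn0Sn _).
field.
by rewrite h1 h2.
Qed.

Lemma gauss_theta (q m : nat) : (1 < q)%N -> gauss_binom q m.+1 m = theta q m.
Proof.
move=> q1; rewrite /gauss_binom /theta prodf_div.
pose P k := \prod_(i < k) ((q ^ i.+1)%N%:R - 1 : rat).
have e1 : P m.+1 = ((q ^ 1)%N%:R - 1) * \prod_(i < m) ((q ^ i.+2)%N%:R - 1).
  by rewrite /P big_ord_recl.
have e2 : P m.+1 = P m * ((q ^ m.+1)%N%:R - 1) by rewrite /P big_ord_recr.
rewrite (reindex_inj rev_ord_inj) /=.
rewrite (eq_bigr (fun i : 'I_m => ((q ^ i.+2)%N%:R - 1 : rat))); last first.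
  by move=> i _; congr (_%:R - 1); congr (_ ^ _)%N; have := ltn_ord i; lia.
have h1 := prod_pow_neq0' m q1.
have h2 := @pow_sub1_neq0 q 1 q1 (ltn0Sn _).
rewrite expn1 in e1 h2.
have : \prod_(i < m) ((q ^ i.+2)%N%:R - 1 : rat) = P m * ((q ^ m.+1)%N%:R - 1) / (q%:R - 1).
  by rewrite -e2 e1; field; exact: h2.
move=> ->; rewrite -/(P m).
field.
by rewrite h1 h2.
Qed.

Lemma alg_final (a b th s y z : rat) : y - 1 != 0 ->
  b = a * (y * z - 1) / (y - 1) -> th * b + a = th * a + s ->
  s = a * (1 + th * y * ((z - 1) / (y - 1))).
Proof.
move=> y1 eb es.
have -> : s = th * b + a - th * a by rewrite es; ring.
rewrite eb; field.
exact: y1.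
Qed.

Unset Implicit Arguments.

Theorem mainTheorem5 (F : finFieldType) (n k t : nat) (Gamma : 'M[F]_(n.+1)) :
  (t < k)%N -> (2 * k - t < n)%N -> is_pspace (t + 2) Gamma ->
  let q := #|F| in
  let S := pspaces_meeting k (t + 1) Gamma in
  maximal_t_intersecting k t S /\
  ((t.+1 < k)%N ->
   (#|S|%:R : rat) =
     gauss_binom q (n - t - 2) (k - t - 2) *
     (1 + theta q (t + 2) * (q ^ (k - t - 1))%N%:R *
          (((q ^ (n - k))%N%:R - 1) / ((q ^ (k - t - 1))%N%:R - 1)))).
Proof.
move=> tk nk pG q S.
have pG' := pG; move/andP: pG' => [/eqP gG /eqP rG].
have rG3 : \rank Gamma = (t + 3)%N by rewrite rG; lia.
split.
  split.
    split.
      by move=> A; rewrite inE => /andP[].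
    move=> A B; rewrite !inE => /andP[_ mA] /andP[_ mB]; move: mA mB.
    rewrite /meet_atleast => mA mB.
    have h := mxrank_sum_cap (A :&: Gamma)%MS (B :&: Gamma)%MS.
    have h1 : (\rank (A :&: Gamma + B :&: Gamma)%MS <= \rank Gamma)%N.
      by apply: mxrankS; rewrite addsmx_sub !capmxSr.
    have h2 : (\rank ((A :&: Gamma) :&: (B :&: Gamma))%MS <= \rank (A :&: B)%MS)%N.
      by apply: mxrankS; apply: capmxS; apply: capmxSl.
    lia.
  move=> X pX XS [_ hall].
  move/andP: (pX) => [gX /eqP rX].
  have XG : (\rank (X :&: Gamma)%MS <= t.+1)%N.
    move: XS; rewrite inE pX /= /meet_atleast; lia.
  have [Y [rY rYG rXY]] := construct_Y (erefl n.+1) tk nk rG3 rX XG.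
  have YS : <<Y>>%MS \in S.
    rewrite inE /is_pspace /is_subspace genmx_id eqxx mxrank_gen rY eqxx /=.
    rewrite /meet_atleast (cap_eqmx (genmxE Y) (eqmx_refl Gamma)); lia.
  have := hall X <<Y>>%MS (setU11 _ _) (setU1r _ YS).
  rewrite /meet_atleast (cap_eqmx (eqmx_refl X) (genmxE Y)); lia.
move=> tk1.
have q1 : (1 < q)%N by apply: finNzRing_gt1.
pose P := [set K : 'M[F]_n.+1 | is_pspace k K].
pose Hs := [set H : 'M[F]_n.+1 | [&& <<H>>%MS == H, \rank H == (t + 2)%N & (H <= Gamma)%MS]].
have cnt : forall (H : 'M[F]_n.+1) (d : nat), is_subspace H -> \rank H = d -> (d <= k.+1)%N ->
    (#|[set K in P | (H <= K)%MS]|%:R : rat) = gauss_binom q (n.+1 - d) (k.+1 - d).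
  move=> H d gH rH dk.
  have rD : \rank (row_base H) = \rank H by rewrite (eq_row_base H).
  have DG : (row_base H <= 1%:M)%MS by apply: submx1.
  have := card_Ks (k.+1 - d) rD DG.
  have -> : #|Ks (k.+1 - d) (row_base H) 1%:M| = #|[set K in P | (H <= K)%MS]|.
    apply: eq_card => K; rewrite !inE /is_pspace /is_subspace submx1 andbT.
    rewrite (eq_row_base H) rH; have -> : (d + (k.+1 - d))%N = k.+1 by lia.
    by rewrite andbA.
  rewrite mxrank1 rH => e.
  by rewrite (ratio_gauss q1 _ e) //; lia.
have [H0 [H0G rH0]] : exists H0 : 'M[F]_n.+1, (H0 <= Gamma)%MS /\ \rank H0 = (t + 2)%N.
  by apply: exists_sub; rewrite rG3; lia.
pose B := #|[set K in P | (<<H0>>%MS <= K)%MS]|.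
have eB : (B%:R : rat) = gauss_binom q (n.+1 - (t + 2)) (k.+1 - (t + 2)).
  by apply: cnt; rewrite ?/is_subspace ?genmx_id ?mxrank_gen //; lia.
have hB : forall H, H \in Hs -> #|[set K in P | (H <= K)%MS]| = B.
  move=> H; rewrite inE => /and3P[gH /eqP rH _].
  have dk : (t + 2 <= k.+1)%N by lia.
  by apply/eqP; rewrite -(eqr_nat rat) eB (cnt H (t + 2)%N gH rH dk).
have dc := @double_count F n t k Gamma B pG hB.
have eA : (#|[set K in P | (Gamma <= K)%MS]|%:R : rat) =
          gauss_binom q (n.+1 - (t + 3)) (k.+1 - (t + 3)).
  apply: (cnt Gamma (t + 3)%N); [by rewrite /is_subspace gG | exact: rG3 | lia].
have eH : (#|Hs|%:R : rat) = theta q (t + 2).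
  have rD : \rank (0 : 'M[F]_(0, n.+1)) = 0%N by apply: mxrank0.
  have DG : ((0 : 'M[F]_(0, n.+1)) <= Gamma)%MS by apply: sub0mx.
  have := card_Ks (t + 2) rD DG.
  have -> : #|Ks (t + 2) (0 : 'M[F]_(0, n.+1)) Gamma| = #|Hs|.
    by apply: eq_card => K; rewrite !inE sub0mx add0n.
  move=> e; rewrite (ratio_gauss q1 _ e); last by rewrite rG3; lia.
  by rewrite rG3 subn0 -gauss_theta // addn3 addn2.
move/(congr1 (fun x => (x%:R : rat))): dc; rewrite !natrD !natrM.
rewrite eA eB eH -/S.

have em : (n.+1 - (t + 3) = n - t - 2)%N by lia.
have ej : (k.+1 - (t + 3) = k - t - 2)%N by lia.
have em1 : (n.+1 - (t + 2) = (n - t - 2).+1)%N by lia.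
have ej1 : (k.+1 - (t + 2) = (k - t - 2).+1)%N by lia.
rewrite em1 ej1 gauss_pascal // em ej => es.
apply: (alg_final _ _ es).
  by apply: pow_sub1_neq0 => //; lia.
have -> : (k - t - 1)%N = (k - t - 2).+1 by lia.
have -> : (n - t - 2).+1 = ((k - t - 2).+1 + (n - k))%N by lia.
by rewrite expnD natrM.
Qed.
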